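(* Let $A$ be a finite alphabet and $k\ge 0$. Then $\sim_{k+1}$ refines $\sim_k$, and $\sim_k$ is a congruence of finite index on $A^{\Delta}$ whose quotient forest algebra has idempotent and commutative horizontal monoid.
   Context: $A^{\Delta}=(H_A,V_A)$: $H_A$ is the monoid of forests over $A$ (finite ordered sequences of finite ordered $A$-labelled trees) under concatenation $+$; $V_A$ the monoid of contexts (forests with exactly one leaf replaced by a hole) acting by substitution; $as$ is the tree with root $a$ and child forest $s$. A congruence on $A^{\Delta}$ is an equivalence $\sim$ on $H_A$ with $s\sim s'\Rightarrow ps\sim ps'$ for every context $p$; the quotient forest algebra has horizontal monoid $H_A/{\sim}$ and vertical monoid the contexts modulo acting identically on classes. Equivalences $\sim_k$: $\sim_0$ identifies all forests; for $k\ge0$ and $s=a_1s_1+\cdots+a_rs_r$ ($a_i\in A$, $s_i\in H_A$) let $T^{k+1}_s=\{(a_i,[s_i]_{\sim_k}):1\le i\le r\}$, and $s\sim_{k+1}s'$ iff $T^{k+1}_s=T^{k+1}_{s'}$. *)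

(* Defs.v *)
From mathcomp Require Import all_boot.
From Stdlib Require List.

Set Implicit Arguments.
Unset Strict Implicit.
Unset Printing Implicit Defensive.

Inductive tree (A : Type) : Type :=
  | Node : A -> list (tree A) -> tree A.

Definition forest (A : Type) := list (tree A).

Definition label A (t : tree A) : A := let: Node a _ := t in a.
Definition children A (t : tree A) : forest A := let: Node _ s := t in s.

Definition fplus A (s t : forest A) : forest A := s ++ t.

(* Contexts (V_A): forests with exactly one leaf replaced by a hole.
   Hole: the bare hole; CPlus l c r : l + c + r; CNode a c : the tree a(c). *)
Inductive context (A : Type) : Type :=
  | Hole : context A
  | CPlus : forest A -> context A -> forest A -> context A
  | CNode : A -> context A -> context A.

Fixpoint subst A (p : context A) (s : forest A) : forest A :=
  match p with
  | Hole => s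
  | CPlus l c r => l ++ subst c s ++ r
  | CNode a c => [:: Node a (subst c s)]
  end.

(* The equivalences ~_k.  s ~_{k+1} s' iff T^{k+1}_s = T^{k+1}_{s'}, where
   T^{k+1}_s = { (a_i, [s_i]_{~k}) }; equality of the classes [u]_{~k} and
   [v]_{~k} is written extensionally as (forall w, u ~k w <-> v ~k w). *)
Definition subsetT A (simk : forest A -> forest A -> Prop) (s s' : forest A) :=
  forall x, List.In x s -> exists y, List.In y s' /\ label x = label y /\
    (forall w, simk (children x) w <-> simk (children y) w).

Fixpoint sim A (k : nat) : forest A -> forest A -> Prop :=
  match k with
  | 0 => fun _ _ => True
  | k'.+1 => fun s s' => subsetT (sim k') s s' /\ subsetT (sim k') s' s
  end.

Definition is_congruence A (R : forest A -> forest A -> Prop) :=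
  [/\ (forall s, R s s),
      (forall s t, R s t -> R t s),
      (forall s t u, R s t -> R t u -> R s u)
    & (forall p s t, R s t -> R (subst p s) (subst p t))].

Definition finite_index A (R : forest A -> forest A -> Prop) :=
  exists reps : seq (forest A), forall s, exists r, List.In r reps /\ R s r.

(* The quotient horizontal monoid H_A/R (with [s]+[t] = [s+t]) is
   idempotent and commutative. *)
Definition horiz_idem_comm A (R : forest A -> forest A -> Prop) :=
  (forall s, R (fplus s s) s) /\ (forall s t, R (fplus s t) (fplus t s)).

(* Main.v *)
Require Import Defs.
From mathcomp Require Import all_boot.
From Stdlib Require Import Classical.
Set Implicit Arguments.
Unset Strict Implicit.
From Stdlib Require List.

Section S.
Variable A : Type.
Implicit Types (s t u v w X Y : forest A).

Lemma subsetT_refl (Rl : forest A -> forest A -> Prop) s : Defs.subsetT Rl s s.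
Proof. move=> x Hx; exists x; split=> //; split=> // w; tauto. Qed.

Lemma subsetT_incl (Rl : forest A -> forest A -> Prop) s s' :
  (forall x, List.In x s -> List.In x s') -> Defs.subsetT Rl s s'.
Proof. move=> H x Hx; exists x; split; first by apply: H. split=> // w; tauto. Qed.

Lemma subsetT_trans (Rl : forest A -> forest A -> Prop) s t u :
  Defs.subsetT Rl s t -> Defs.subsetT Rl t u -> Defs.subsetT Rl s u.
Proof.
move=> H1 H2 x Hx; have [y [Hy [l1 c1]]] := H1 x Hx.
have [z [Hz [l2 c2]]] := H2 y Hy.
exists z; split=> //; split; first by rewrite l1.
move=> w; rewrite c1; exact: c2.
Qed.

Lemma subsetT_app (Rl : forest A -> forest A -> Prop) a b c d :
  Defs.subsetT Rl a b -> Defs.subsetT Rl c d -> Defs.subsetT Rl (a ++ c) (b ++ d).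
Proof.
move=> H1 H2 x Hx; case: (List.in_app_or _ _ _ Hx) => {}Hx.
- have [y [Hy H]] := H1 x Hx; exists y; split=> //; apply: List.in_or_app; by left.
- have [y [Hy H]] := H2 x Hx; exists y; split=> //; apply: List.in_or_app; by right.
Qed.

Lemma sim_refl k s : sim k s s.
Proof. by case: k => [|k] //=; split; apply: subsetT_refl. Qed.

Lemma sim_sym k s t : sim k s t -> sim k t s.
Proof. by case: k => [|k] //= [H1 H2]; split. Qed.

Lemma sim_trans k s t u : sim k s t -> sim k t u -> sim k s u.
Proof.
case: k => [|k] //= [H1 H2] [H3 H4]; split; apply: subsetT_trans; eauto.
Qed.

Lemma cls k u v : sim k u v -> forall w, sim k u w <-> sim k v w.
Proof.
move=> H w; split=> H'.
- exact: sim_trans (sim_sym H) H'.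
- exact: sim_trans H H'.
Qed.

Lemma sim_refine k s t : sim k.+1 s t -> sim k s t.
Proof.
elim: k s t => [|k IH] s t //=.
have key : forall s t, Defs.subsetT (sim k.+1) s t -> Defs.subsetT (sim k) s t.
  move=> s0 t0 H x Hx; have [y [Hy [l c]]] := H x Hx.
  exists y; split=> //; split=> //; apply: cls; apply: IH.
  by apply/c; apply: sim_refl.
by move=> [H1 H2]; split; apply: key.
Qed.

Lemma sim_app k (a b c d : forest A) : sim k a b -> sim k c d -> sim k (a ++ c) (b ++ d).
Proof.
case: k => [|k] //= [H1 H2] [H3 H4]; split; exact: subsetT_app.
Qed.

Lemma sim_node k (a : A) X Y : sim k X Y -> sim k [:: Node a X] [:: Node a Y].
Proof.
case: k => [|k] //= H; have H' := sim_refine H.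
split=> x /= [<-|[]].
- exists (Node a Y); split; first by left. split=> //=; exact: cls.
- exists (Node a X); split; first by left. split=> //=; apply: cls; exact: sim_sym.
Qed.

Lemma sim_subst k (p : context A) s t : sim k s t -> sim k (subst p s) (subst p t).
Proof.
move=> H; elim: p => [|l c IH r|a c IH] //=.
- apply: sim_app; first exact: sim_refl. apply: sim_app=> //; exact: sim_refl.
- exact: sim_node.
Qed.

Fixpoint powlist (T : Type) (L : list T) : list (list T) :=
  match L with
  | [::] => [:: [::]]
  | x :: L' => map (cons x) (powlist L') ++ powlist L'
  end.

Lemma powlist_ex (T : Type) (L : list T) (P : T -> Prop) :
  exists S, List.In S (powlist L) /\ forall y, List.In y S <-> List.In y L /\ P y.
Proof.
elim: L => [|x L [S [HS HS']]] /=.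
  exists [::]; split; first by left. move=> y /=; tauto.
case: (classic (P x)) => Px.
- exists (x :: S); split.
    apply: List.in_or_app; left; exact: List.in_map.
  move=> y /=; rewrite HS'; split.
  + case=> [<-|]; tauto.
  + case=> [[->|Hy] Py]; tauto.
- exists S; split; first by apply: List.in_or_app; right.
  move=> y; rewrite HS'; split; first tauto.
  case=> [[<-|Hy] Py]; tauto.
Qed.

End S.

Lemma mem_In (T : eqType) (x : T) s : x \in s -> List.In x s.
Proof.
elim: s => [|y s IH] //=; rewrite in_cons => /orP [/eqP->|H]; [by left|right; exact: IH].
Qed.

Lemma sim_fin (A : finType) k : finite_index (@sim A k).
Proof.
elim: k => [|k [reps Hreps]].
  by exists [:: [::]] => s; exists [::]; split => //; left.
pose L := List.list_prod (enum A) reps.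
exists (map (map (fun p : A * forest A => Node p.1 p.2)) (powlist L)) => s.
pose P := fun p : A * forest A => exists x, List.In x s /\ label x = p.1 /\ sim k (children x) p.2.
have [S [HS HS']] := powlist_ex L P.
exists (map (fun p : A * forest A => Node p.1 p.2) S); split; first exact: List.in_map.
split.
- move=> x Hx; have [r [Hr Hxr]] := Hreps (children x).
  have HL : List.In (label x, r) L by apply: List.in_prod => //; apply: mem_In; rewrite mem_enum.
  have HSin : List.In (label x, r) S by apply/HS'; split=> //; exists x.
  exists (Node (label x) r); split; first by apply: (List.in_map (fun p : A * forest A => Node p.1 p.2) _ _ HSin).
  split=> //=; exact: cls.
- move=> y /List.in_map_iff [[a r] [<- Hin]].
  have [_ [x [Hx [la Hc]]]] := (HS' _).1 Hin.
  exists x; split=> //; split=> //=; apply: cls; exact: sim_sym.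
Qed.

Theorem proposition3 (A : finType) (k : nat) :
  (forall s t : forest A, sim k.+1 s t -> sim k s t) /\
  is_congruence (@sim A k) /\
  finite_index (@sim A k) /\
  horiz_idem_comm (@sim A k).
Proof.
split; first exact: sim_refine.
split; first by split; [exact: sim_refl|exact: sim_sym|exact: sim_trans|move=> p s t; exact: sim_subst].
split; first exact: sim_fin.
split.
- case: k => [|k] s //=; rewrite /fplus; split; apply: subsetT_incl => x.
  + by move=> H; case: (List.in_app_or _ _ _ H).
  + by move=> H; apply: List.in_or_app; left.
- case: k => [|k] s t //=; rewrite /fplus; split; apply: subsetT_incl => x;
  move=> H; case: (List.in_app_or _ _ _ H) => {}H; apply: List.in_or_app; tauto.
Qed.
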